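(* Let $\texttt{ALG}$ be an online non-preemptive scheduler for the serial-parallel scheduling problem on $p$ processors, fix a constant $c>0$, and let $R\in\mathbb{N}$. Then there exists a task arrival process $\mathcal{T}$ on which the competitive ratio of $\texttt{ALG}$ with $c$ speed augmentation for mean response time is $\Omega(R)$, i.e., $\mathrm{TRT}^{\mathcal{T}}_{\texttt{ALG}}\ge\Omega(R)\cdot\mathrm{TRT}^{c\cdot\mathcal{T}}_{\texttt{OPT}}$. In particular $\texttt{ALG}$ can perform arbitrarily worse than $\texttt{OPT}$.
   Context: Serial-parallel scheduling problem: $p$ identical processors. A task arrival process is a finite set of tasks $\tau_i=(\sigma_i,\pi_i,t_i)$, $i=1,\dots,n$, with arrival time $t_i\ge0$, serial work $\sigma_i\ge0$ and parallel work $\pi_i$, with $1\le\pi_i/\sigma_i\le p$ when $\sigma_i>0$. A task is performed either by its serial job (work $\sigma_i$, at most one processor at any instant) or by its parallel job (work $\pi_i$, any number of processors, rate equal to number of processors); time is continuous. A scheduler is non-preemptive if the number of processors it assigns to each task is fixed for the full duration during which the task executes. Total response time $\mathrm{TRT}=\sum_i(f_i-t_i)$ with $f_i$ the completion time; mean response time is $\mathrm{TRT}/n$. $\mathrm{TRT}^{\mathcal{T}}_{\texttt{OPT}}$ is the optimal offline (preemptive) total response time. For $c>0$, $c\cdot\mathcal{T}$ is $\mathcal{T}$ with all works multiplied by $c$; comparing $\mathrm{TRT}_{\texttt{ALG}}^{\mathcal{T}}$ with $\mathrm{TRT}_{\texttt{OPT}}^{c\cdot\mathcal{T}}$ means $\texttt{ALG}$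 has $c$ speed augmentation. Competitive ratio here is worst-case. *)

(* Defs.v *)
From HB Require Import structures.
From mathcomp Require Import all_boot all_order all_algebra.
From mathcomp Require Import classical_sets boolp reals Rstruct.
Set Implicit Arguments. Unset Strict Implicit. Unset Printing Implicit Defensive.
Import Order.TTheory GRing.Theory Num.Theory.
Local Open Scope ring_scope.
Local Open Scope classical_set_scope.

(* A task (sigma, pi, t): serial work, parallel work, arrival time. *)
Notation R := Rdefinitions.R.
Record task := Task { sigma : R; pi : R; arr : R }.
Definition dtask : task := Task 0 0 0.

Definition process := seq task.
Definition tk (T : process) (i : nat) : task := nth dtask T i.

Definition valid_task (p : nat) (x : task) : Prop :=
  0 <= arr x /\ 0 <= sigma x /\ 0 <= pi x /\
  (0 < sigma x -> sigma x <= pi x /\ pi x <= p%:R * sigma x).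
Definition valid_process (p : nat) (T : process) : Prop :=
  forall i, (i < size T)%N -> valid_task p (tk T i).

Definition scale (c : R) (T : process) : process :=
  map (fun x => Task (c * sigma x) (c * pi x) (arr x)) T.

Definition work (x : task) (par : bool) : R := if par then pi x else sigma x.

Record np_decision := NPDec { start : R; procs : nat; par : bool }.
Definition np_schedule := nat -> np_decision.

Definition np_finish (T : process) (S : np_schedule) (i : nat) : R :=
  start (S i) + work (tk T i) (par (S i)) / (procs (S i))%:R.

Definition np_feasible (p : nat) (T : process) (S : np_schedule) : Prop :=
  (forall i, (i < size T)%N ->
     arr (tk T i) <= start (S i) /\ (0 < procs (S i))%N /\
     (~~ par (S i) -> procs (S i) = 1%N)) /\
  (forall tau : R,
     (\sum_(i < size T | ((start (S i) <= tau)%R && (tau < np_finish T S i)%R))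
        procs (S i) <= p)%N).

Definition TRT_np (T : process) (S : np_schedule) : R :=
  \sum_(i < size T) (np_finish T S i - arr (tk T i)).

(* An online non-preemptive scheduler: maps each arrival process to a feasible
   non-preemptive schedule, and its decisions taken up to time t do not depend
   on tasks arriving after time t. *)
Definition online_np_scheduler (p : nat) (ALG : process -> np_schedule) : Prop :=
  (forall T, valid_process p T -> np_feasible p T (ALG T)) /\
  (forall (T E : process) (t : R),
     valid_process p T -> valid_process p (T ++ E) ->
     (forall j, (j < size E)%N -> t < arr (tk E j)) ->
     forall i, (i < size T)%N ->
       (start (ALG T i) <= t \/ start (ALG (T ++ E) i) <= t) ->
       ALG (T ++ E) i = ALG T i).

Definition TRT_ALG (ALG : process -> np_schedule) (T : process) : R :=
  TRT_np T (ALG T).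

(* Time is cut by breakpoints b 0 <= b 1 <= ... <= b m; on [b j, b (j+1))
   task i receives [alloc j i] processors; [mode i] chooses the job;
   [fin i] is the completion time. *)
Record pschedule := PSched {
  nseg : nat; bp : nat -> R; alloc : nat -> nat -> nat;
  mode : nat -> bool; fin : nat -> R }.

Definition done (S : pschedule) (i : nat) (tau : R) : R :=
  \sum_(j < nseg S)
    (alloc S j i)%:R * Num.max 0 (Num.min tau (bp S j.+1) - bp S j).

Definition p_feasible (p : nat) (T : process) (S : pschedule) : Prop :=
  (forall j, (j < nseg S)%N -> bp S j <= bp S j.+1) /\
  (forall j, (j < nseg S)%N -> (\sum_(i < size T) alloc S j i <= p)%N) /\
  (forall j i, (j < nseg S)%N -> (i < size T)%N ->
      (0 < alloc S j i)%N -> arr (tk T i) <= bp S j) /\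
  (forall j i, (j < nseg S)%N -> (i < size T)%N ->
      ~~ mode S i -> (alloc S j i <= 1)%N) /\
  (forall i, (i < size T)%N ->
      arr (tk T i) <= fin S i /\ work (tk T i) (mode S i) <= done S i (fin S i)).

Definition TRT_p (T : process) (S : pschedule) : R :=
  \sum_(i < size T) (fin S i - arr (tk T i)).

Definition TRT_OPT (p : nat) (T : process) : R :=
  inf [set TRT_p T S | S in [set S | p_feasible p T S]].

(* Main.v *)
Require Import Defs.
From mathcomp Require Import all_boot all_order all_algebra.
From mathcomp Require Import classical_sets boolp reals Rstruct.
From mathcomp Require Import ring lra zify.
Import Defs.
Import Order.TTheory GRing.Theory Num.Theory.
Set Implicit Arguments. Unset Strict Implicit.
Local Open Scope ring_scope.

Lemma minR (x y : R) : Num.min x y <= x /\ Num.min x y <= y /\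
  (Num.min x y = x \/ Num.min x y = y).
Proof.
rewrite ge_min lexx ge_min lexx orbT /=; split => //; split => //.
by case: (leP x y) => h; first [by left | by right].
Qed.

Lemma maxR (x y : R) : x <= Num.max x y /\ y <= Num.max x y /\
  (Num.max x y = x \/ Num.max x y = y).
Proof.
rewrite le_max lexx le_max lexx orbT /=; split => //; split => //.
by case: (leP x y) => h; first [by left | by right].
Qed.

Lemma step_ineq (t bm bm1 a : R) : bm <= bm1 ->
  Num.max 0 (Num.min t bm - a) +
  (if a <= bm then Num.max 0 (Num.min t bm1 - bm) else 0)
  <= Num.max 0 (Num.min t bm1 - a).
Proof.
move=> hb.
have [h1 [h2 h3]] := minR t bm.
have [h4 [h5 h6]] := minR t bm1.
have [h7 [h8 h9]] := maxR 0 (Num.min t bm - a).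
have [h10 [h11 h12]] := maxR 0 (Num.min t bm1 - a).
have [h13 [h14 h15]] := maxR 0 (Num.min t bm1 - bm).
case: ifP => /= ha.
  case: h3 => e1; case: h6 => e2; case: h9 => e3; case: h12 => e4; case: h15 => e5; lra.
move/negbT: ha; rewrite -ltNge => ha.
case: h3 => e1; case: h6 => e2; case: h9 => e3; case: h12 => e4; lra.
Qed.

Lemma tele (b : nat -> R) (a tau : R) m :
  (forall j, (j < m)%N -> b j <= b j.+1) ->
  \sum_(j < m) (if a <= b j then Num.max 0 (Num.min tau (b j.+1) - b j) else 0)
   <= Num.max 0 (Num.min tau (b m) - a).
Proof.
elim: m => [|m IH] hb.
  by rewrite big_ord0 le_max lexx.
rewrite big_ord_recr /=.
apply: le_trans (@step_ineq tau (b m) (b m.+1) a (hb m (ltnSn m))).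
apply: lerD => //; apply: IH => j hj; apply: hb; exact: ltnW.
Qed.

Lemma alloc_le p T sch j i : p_feasible p T sch -> (j < nseg sch)%N -> (i < size T)%N ->
  (alloc sch j i <= p)%N.
Proof.
move=> [_ [hs _]] hj hi.
apply: leq_trans (hs j hj).
by rewrite (bigD1 (Ordinal hi)) //= leq_addr.
Qed.

Lemma done_le p T sch i tau : p_feasible p T sch -> (i < size T)%N ->
  done sch i tau <= p%:R * Num.max 0 (Num.min tau (bp sch (nseg sch)) - arr (tk T i)).
Proof.
move=> hf hi.
have [hmono [_ [harr _]]] := hf.
apply: le_trans (_ : p%:R * \sum_(j < nseg sch)
   (if arr (tk T i) <= bp sch j then
      Num.max 0 (Num.min tau (bp sch j.+1) - bp sch j) else 0) <= _); last first.
  apply: ler_wpM2l; first by rewrite ler0n.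
  exact: tele.
rewrite /done mulr_sumr; apply: ler_sum => j _.
have hm : 0 <= Num.max 0 (Num.min tau (bp sch j.+1) - bp sch j) by rewrite le_max lexx.
case hz: (alloc sch j i) => [|k].
  rewrite mul0r; case: ifP => _; last by rewrite mulr0.
  by apply: mulr_ge0 => //; rewrite ler0n.
have ha : arr (tk T i) <= bp sch j by apply: harr => //; rewrite hz.
rewrite ha; apply: ler_wpM2r => //; rewrite ler_nat -hz.
exact: (alloc_le hf (ltn_ord j) hi).
Qed.

Lemma resp_lb p T sch i : (0 < p)%N -> p_feasible p T sch -> (i < size T)%N ->
  work (tk T i) (mode sch i) / p%:R <= fin sch i - arr (tk T i).
Proof.
move=> hp hf hi.
have [_ [_ [_ [_ hfin]]]] := hf.
have [h1 h2] := hfin i hi.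
have := done_le (fin sch i) hf hi.
have [m1 [m2 m3]] := minR (fin sch i) (bp sch (nseg sch)).
set mx := Num.max 0 _.
have hmx : mx <= fin sch i - arr (tk T i).
  have [x1 [x2 x3]] := maxR 0 (Num.min (fin sch i) (bp sch (nseg sch)) - arr (tk T i)).
  rewrite /mx; case: x3 => ->; lra.
move=> hd.
have hp' : 0 < (p%:R : R) by rewrite ltr0n.
rewrite ler_pdivrMr //.
have : p%:R * mx <= p%:R * (fin sch i - arr (tk T i)) by apply: ler_wpM2l => //; exact: ltW.
move=> h; rewrite mulrC; lra.
Qed.

Lemma TRT_p_ge0 p T sch : p_feasible p T sch -> 0 <= TRT_p T sch.
Proof.
move=> [_ [_ [_ [_ hfin]]]].
apply: sumr_ge0 => i _; have [h _] := hfin i (ltn_ord i); lra.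
Qed.

Lemma tk_scale c T i : tk (scale c T) i =
  Task (c * sigma (tk T i)) (c * pi (tk T i)) (arr (tk T i)).
Proof.
rewrite /tk /scale; case: (ltnP i (size T)) => hi.
  by rewrite (nth_map dtask).
by rewrite !nth_default ?size_map //= !mulr0.
Qed.

Definition sw (S : process) (i : nat) : R := \sum_(i <= l < size S) pi (tk S l).

Definition rsched (p : nat) (S : process) (A : R) : pschedule :=
  PSched (size S) (fun j => A + sw S (size S - j) / p%:R)
    (fun j i => if i == (size S - j.+1)%N then p else 0%N)
    (fun _ => true) (fun i => A + sw S i / p%:R).

Definition UBs (p : nat) (S : process) (A : R) : R :=
  \sum_(i < size S) (A + sw S i / p%:R - arr (tk S i)).

Lemma sw_S S i : (i < size S)%N -> sw S i = pi (tk S i) + sw S i.+1.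
Proof. by move=> hi; rewrite /sw big_ltn. Qed.

Lemma sw_ge0 S i : (forall l, (l < size S)%N -> 0 <= pi (tk S l)) -> 0 <= sw S i.
Proof.
move=> h; rewrite /sw big_nat_cond; apply: sumr_ge0 => l /andP[/andP[_ hl] _].
exact: h.
Qed.

Lemma rsched_feas p S A : (0 < p)%N ->
  (forall l, (l < size S)%N -> 0 <= pi (tk S l)) ->
  (forall l, (l < size S)%N -> arr (tk S l) <= A) ->
  p_feasible p S (rsched p S A).
Proof.
move=> hp hpi harr.
have hp' : 0 < (p%:R : R) by rewrite ltr0n.
have bpS : forall j, (j < size S)%N ->
   A + sw S (size S - j.+1) / p%:R =
   A + sw S (size S - j) / p%:R + pi (tk S (size S - j.+1)) / p%:R.
  move=> j hj.
  have e : (size S - j = (size S - j.+1).+1)%N by rewrite subnS prednK // subn_gt0.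
  rewrite e sw_S; last by rewrite -e leq_subr.
  by rewrite mulrDl addrA addrAC.
have hsw : forall i, 0 <= sw S i / p%:R.
  by move=> i; apply: divr_ge0; [exact: sw_ge0 | exact: ltW].
split.
  move=> j hj /=; rewrite bpS //.
  have hl : (size S - j.+1 < size S)%N by move: hj => /=; lia.
  have := hpi _ hl => h.
  have : 0 <= pi (tk S (size S - j.+1)) / p%:R by apply: divr_ge0 => //; exact: ltW.
  lra.
split.
  move=> j hj /=.
  have hl : (size S - j.+1 < size S)%N by move: hj => /=; lia.
  rewrite (bigD1 (Ordinal hl)) //= eqxx big1 ?addn0 // => i hi.
  case: eqP => // e; case/negP: hi; apply/eqP; apply: val_inj; exact: e.
split.
  move=> j i hj hi /=; case: eqP => // e _; subst i.
  have := harr _ hi; have := hsw (size S - j)%N; lra.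
split => //.
move=> i hi /=; split; first by have := harr _ hi; have := hsw i; lra.
rewrite /done /=.
have hl : (size S - i.+1 < size S)%N by lia.
rewrite (bigD1 (Ordinal hl)) //=.
have e1 : (size S - (size S - i.+1).+1 = i)%N by lia.
have e2 : (size S - (size S - i.+1) = i.+1)%N by lia.
rewrite e1 e2 eqxx minxx (sw_S hi).
have hpi0 := hpi _ hi.
have hpi' : 0 <= pi (tk S i) / p%:R by apply: divr_ge0 => //; exact: ltW.
have -> : A + (pi (tk S i) + sw S i.+1) / p%:R - (A + sw S i.+1 / p%:R) = pi (tk S i) / p%:R.
  by rewrite mulrDl; lra.
rewrite (max_r hpi') mulrC divfK; last by rewrite lt0r_neq0.
rewrite lerDl; apply: sumr_ge0 => j _; apply: mulr_ge0; first by rewrite ler0n.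
by rewrite le_max lexx.
Qed.

Lemma OPT_le_UB p S A : (0 < p)%N ->
  (forall l, (l < size S)%N -> 0 <= pi (tk S l)) ->
  (forall l, (l < size S)%N -> arr (tk S l) <= A) ->
  TRT_OPT p S <= UBs p S A.
Proof.
move=> hp hpi harr.
have hlb : has_lbound [set TRT_p S sch | sch in [set sch | p_feasible p S sch]].
  by exists 0 => y [sch hf <-]; exact: TRT_p_ge0 hf.
apply: (ge_inf hlb).
by exists (rsched p S A) => //; exact: rsched_feas.
Qed.

Lemma OPT_pos p S A i0 : (0 < p)%N ->
  (forall l, (l < size S)%N -> 0 <= pi (tk S l)) ->
  (forall l, (l < size S)%N -> arr (tk S l) <= A) ->
  (i0 < size S)%N -> 0 < sigma (tk S i0) -> sigma (tk S i0) <= pi (tk S i0) ->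
  0 < TRT_OPT p S.
Proof.
move=> hp hpi harr hi0 hs hsp.
have hp' : 0 < (p%:R : R) by rewrite ltr0n.
apply: (@lt_le_trans _ _ (sigma (tk S i0) / p%:R)); first exact: divr_gt0.
apply: lb_le_inf.
  by exists (TRT_p S (rsched p S A)); exists (rsched p S A) => //; exact: rsched_feas.
move=> y [sch hf <-].
have [_ [_ [_ [_ hfin]]]] := hf.
apply: le_trans (_ : fin sch i0 - arr (tk S i0) <= _).
  apply: le_trans (resp_lb hp hf hi0).
  apply: ler_wpM2r; first by rewrite invr_ge0 ltW.
  by rewrite /work; case: (mode sch i0).
rewrite /TRT_p (bigD1 (Ordinal hi0)) //= lerDl.
apply: sumr_ge0 => i _; have [h _] := hfin i (ltn_ord i); lra.
Qed.

Definition fl (a d : R) : task := Task d d a.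
Definition flood (N : nat) (a d : R) : process := nseq N (fl a d).

Definition busyN (T : process) (S : np_schedule) (u D : R) : nat :=
  (\sum_(0 <= i < size T)
    (if (start (S i) <= u)%R && (u + D <= np_finish T S i)%R then procs (S i) else 0))%N.

Lemma tk_catl T E i : (i < size T)%N -> tk (T ++ E) i = tk T i.
Proof. by move=> hi; rewrite /tk nth_cat hi. Qed.

Lemma tk_catr T E i : (size T <= i)%N -> tk (T ++ E) i = tk E (i - size T).
Proof. by move=> hi; rewrite /tk nth_cat ltnNge hi. Qed.

Lemma tk_flood N a d j : (j < N)%N -> tk (flood N a d) j = fl a d.
Proof. by move=> hj; rewrite /tk nth_nseq hj. Qed.

Lemma size_Tf T N a d : size (T ++ flood N a d) = (size T + N)%N.
Proof. by rewrite size_cat size_nseq. Qed.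

Lemma tk_Tf_r T N a d i : (size T <= i)%N -> (i < size T + N)%N ->
  tk (T ++ flood N a d) i = fl a d.
Proof. by move=> h1 h2; rewrite tk_catr // tk_flood //; lia. Qed.

Lemma valid_Tf p T N a d : (0 < p)%N -> valid_process p T -> 0 <= a -> 0 < d ->
  valid_process p (T ++ flood N a d).
Proof.
move=> hp hT ha hd i; rewrite size_Tf => hi.
case: (ltnP i (size T)) => h.
  by rewrite tk_catl //; exact: hT.
rewrite tk_Tf_r //; rewrite /valid_task /=.
have hp1 : (1 : R) <= p%:R by rewrite ler1n.
split => //; split; first exact: ltW.
split; first exact: ltW.
move=> _; split => //. 
by rewrite -{1}(mul1r d) ler_wpM2r // ltW.
Qed.

Lemma valid_flood p N a d : (0 < p)%N -> 0 <= a -> 0 < d -> valid_process p (flood N a d).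
Proof.
move=> hp ha hd i; rewrite size_nseq => hi; rewrite tk_flood // /valid_task /=.
have hp1 : (1 : R) <= p%:R by rewrite ler1n.
split => //; split; first exact: ltW.
split; first exact: ltW.
move=> _; split => //.
by rewrite -{1}(mul1r d) ler_wpM2r // ltW.
Qed.

Lemma feas_facts p T S i : valid_process p T -> np_feasible p T S -> (i < size T)%N ->
  arr (tk T i) <= start (S i) /\ (0 < procs (S i))%N /\
  start (S i) <= np_finish T S i.
Proof.
move=> hv [h1 _] hi.
have [ha [hpr _]] := h1 i hi.
split => //; split => //.
have [_ [hs [hpi _]]] := hv i hi.
rewrite /np_finish lerDl; apply: divr_ge0; last by rewrite ler0n.
by rewrite /work; case: (par (S i)).
Qed.

Lemma busy_le p T S u D : np_feasible p T S -> 0 < D -> (busyN T S u D <= p)%N.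
Proof.
move=> [_ hcap] hD.
apply: leq_trans (hcap u).
rewrite /busyN big_mkord [X in (_ <= X)%N]big_mkcond /=.
apply: leq_sum => i _.
case: ifP => //; case/andP => -> h /=.
have -> : u < np_finish T S i by apply: lt_le_trans h; rewrite ltrDl.
by [].
Qed.

Definition Good p c (ALG : process -> np_schedule) (M : R) : Prop :=
  exists T', valid_process p T' /\ (exists i, (i < size T')%N /\ 0 < sigma (tk T' i)) /\
   exists A, (forall i, (i < size T')%N -> arr (tk T' i) <= A) /\
     M * UBs p (scale c T') A <= TRT_ALG ALG T'.

Lemma sw_le0 S i : (forall l, (l < size S)%N -> 0 <= pi (tk S l)) -> sw S i <= sw S 0.
Proof.
move=> h; case: (leqP i (size S)) => hi.
  rewrite {2}/sw (big_cat_nat (leq0n i) hi) /= lerDr.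
  rewrite big_nat_cond; apply: sumr_ge0 => l /andP[/andP[_ hl] _]; apply: h; lia.
by rewrite /sw big_geq ?(ltnW hi) //; exact: sw_ge0.
Qed.

Lemma sum_ord_nat (n : nat) (F : nat -> R) : \sum_(i < n) F i = \sum_(0 <= i < n) F i.
Proof. by rewrite big_mkord. Qed.

Lemma work_fl a d b : work (fl a d) b = d.
Proof. by case: b. Qed.

Lemma step p ALG c T u D k M : (0 < p)%N -> online_np_scheduler p ALG -> 0 < c ->
  valid_process p T -> 0 <= u -> 0 < D -> 0 <= M ->
  (forall i, (i < size T)%N -> arr (tk T i) <= u) ->
  (k <= busyN T (ALG T) u D)%N ->
  Good p c ALG M \/
  exists T' tau D', valid_process p T' /\ 0 <= tau /\ 0 < D' /\
    (forall i, (i < size T')%N -> arr (tk T' i) <= tau) /\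
    (k.+1 <= busyN T' (ALG T') tau D')%N.
Proof.
move=> hp [hfeas hon] hc hT hu hD hM harr hk.
set n0 := size T.
have hD4 : 0 < D / 4 by apply: divr_gt0.
have hD2 : D / 2 = D / 4 + D / 4 by lra.
set a := u + D / 4.
have ha_def : a = u + D / 4 by [].
have ha : 0 <= a by rewrite /a; lra.
have hpiT : forall l, (l < size T)%N -> 0 <= pi (tk T l).
  by move=> l hl; have [_ [_ [h _]]] := hT l hl.
set Pi := sw T 0.
have hPi : 0 <= Pi by exact: sw_ge0.
have hp' : 0 < (p%:R : R) by rewrite ltr0n.
set C0 := n0%:R * (a + (c * Pi + c * D) / p%:R) + c * D / p%:R.
have hC0 : 0 <= C0.
  have hcP : 0 <= c * Pi by apply: mulr_ge0 => //; exact: ltW.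
  have hcD : 0 <= c * D by apply: mulr_ge0; exact: ltW.
  apply: addr_ge0; last by apply: divr_ge0 => //; exact: ltW.
  apply: mulr_ge0; first by rewrite ler0n.
  apply: addr_ge0 => //; apply: divr_ge0; [exact: addr_ge0 | exact: ltW].
set x := 4 * M * C0 / D.
have hx : 0 <= x.
  by rewrite /x; apply: divr_ge0; [apply: mulr_ge0 => //; apply: mulr_ge0 => // | exact: ltW].
set N := (Num.bound x).+1.
have hN : x <= N%:R.
  apply: ltW; apply: lt_le_trans (archi_boundP hx) _; by rewrite ler_nat.
have hN1 : (1 <= N)%N by [].
have hNr : (1 : R) <= N%:R by rewrite ler1n.
set d := D / (2 * (N * N)%:R).
have hNN : 0 < ((N * N)%:R : R) by rewrite ltr0n muln_gt0.
have hd : 0 < d by apply: divr_gt0 => //; apply: mulr_gt0.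
have hNNd : N%:R * (N%:R * d) = D / 2.
  have hN0 : (N%:R : R) != 0 by rewrite pnatr_eq0.
  rewrite /d natrM; field; exact: hN0.
have hNd : N%:R * d <= D / 2.
  rewrite -hNNd; rewrite -{1}(mul1r (N%:R * d)); apply: ler_wpM2r => //.
  by apply: mulr_ge0; [rewrite ler0n | exact: ltW].
have hd2 : d <= D / 2.
  apply: le_trans hNd; rewrite -{1}(mul1r d); apply: ler_wpM2r => //; exact: ltW.
set T' := T ++ flood N a d.
have hT' : valid_process p T' by exact: valid_Tf.
have hF := hfeas T' hT'.
have hsz : size T' = (n0 + N)%N by rewrite size_Tf.
have htl : forall i, (i < n0)%N -> tk T' i = tk T i by move=> i hi; rewrite tk_catl.
have htr : forall i, (n0 <= i)%N -> (i < n0 + N)%N -> tk T' i = fl a d.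
  by move=> i h1 h2; rewrite tk_Tf_r.
case: (pselect (exists j, (n0 <= j < n0 + N)%N /\ start (ALG T' j) <= u + D / 2)).
- case=> j [/andP[hj1 hj2] hjs]; right.
  have hjT : (j < size T')%N by rewrite hsz.
  have [hja [hpr hjf]] := feas_facts hT' hF hjT.
  rewrite htr //= in hja.
  set tau := start (ALG T' j) in hjs hja hjf *.
  set pr := procs (ALG T' j) in hpr *.
  have hprr : (1 : R) <= pr%:R by rewrite ler1n.
  have hD' : 0 < d / pr%:R by apply: divr_gt0 => //; rewrite ltr0n.
  have hD'le : d / pr%:R <= d.
    rewrite ler_pdivrMr ?ltr0n //; rewrite -{1}(mulr1 d); apply: ler_wpM2l => //; exact: ltW.
  exists T', tau, (d / pr%:R).
  split => //; split; first lra.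
  split => //; split.
    move=> i; rewrite hsz => hi; case: (ltnP i n0) => h.
      rewrite htl //; have := harr i h; lra.
    rewrite htr //=; lra.
  rewrite /busyN hsz (big_cat_nat (leq0n n0) (leq_addr N n0)) /=.
  have h1 : (k <= \sum_(0 <= i < n0)
      (if (start (ALG T' i) <= tau)%R && (tau + d / pr%:R <= np_finish T' (ALG T') i)%R
       then procs (ALG T' i) else 0))%N.
    apply: leq_trans hk _; rewrite /busyN.
    rewrite big_nat_cond [X in (_ <= X)%N]big_nat_cond; apply: leq_sum => i /andP[/andP[_ hi] _].
    case: ifP => // /andP[hs hf].
    have e : ALG T' i = ALG T i.
      apply: (hon T (flood N a d) u hT hT') => //; last by left.
      move=> j0; rewrite size_nseq => hj0; rewrite tk_flood //= /a; lra.
    have ef : np_finish T' (ALG T') i = np_finish T (ALG T) i by rewrite /np_finish e htl.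
    rewrite ef e.
    have -> : (start (ALG T i) <= tau) = true by apply/idP; lra.
    have -> : (tau + d / pr%:R <= np_finish T (ALG T) i) = true by apply/idP; lra.
    by [].
  have h2 : (1 <= \sum_(n0 <= i < n0 + N)
      (if (start (ALG T' i) <= tau)%R && (tau + d / pr%:R <= np_finish T' (ALG T') i)%R
       then procs (ALG T' i) else 0))%N.
    rewrite (big_cat_nat hj1 (ltnW hj2)) /= (big_ltn hj2) /=.
    have -> : np_finish T' (ALG T') j = tau + d / pr%:R by rewrite /np_finish htr // work_fl.
    rewrite !lexx /= addnCA; apply: ltn_addr; exact: hpr.
  by apply: leq_trans _ (leq_add h1 h2); rewrite addn1.
- move=> hno; left.
  have hlate : forall i, (n0 <= i < n0 + N)%N -> u + D / 2 < start (ALG T' i).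
    move=> i hi; rewrite ltNge; apply/negP => h; apply: hno; exists i; split => //.
  exists T'; split => //; split.
    have hn0 : (n0 < n0 + N)%N by rewrite -{1}(addn0 n0) ltn_add2l.
    exists n0; split; first by rewrite hsz.
    by rewrite htr.
  exists a; split.
    move=> i; rewrite hsz => hi; case: (ltnP i n0) => h.
      rewrite htl //; have := harr i h; lra.
    rewrite htr //=; lra.
  have hALG : N%:R * (D / 4) <= TRT_ALG ALG T'.
    rewrite /TRT_ALG /TRT_np (sum_ord_nat (size T') (fun i => np_finish T' (ALG T') i - arr (tk T' i))) hsz (big_cat_nat (leq0n n0) (leq_addr N n0)) /=.
    rewrite -[X in X <= _]add0r; apply: lerD.
      rewrite big_nat_cond; apply: sumr_ge0 => i /andP[/andP[_ hi] _].
      have hi' : (i < size T')%N by rewrite hsz; exact: ltn_addr.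
      have [h1 [_ h2]] := feas_facts hT' hF hi'; lra.
    have -> : N%:R * (D / 4) = \sum_(n0 <= i < n0 + N) (D / 4).
      by rewrite sumr_const_nat addKn mulr_natl.
    apply: ler_sum_nat => i hi.
    have hi' : (i < size T')%N by rewrite hsz; case/andP: hi.
    have [h1 [_ h2]] := feas_facts hT' hF hi'.
    have := hlate i hi; move: hi => /andP[hi1 hi2].
    rewrite htr //=; lra.
  set S' := scale c T'.
  have hsS : size S' = (n0 + N)%N by rewrite size_map.
  have hpiS : forall l, (l < size S')%N -> 0 <= pi (tk S' l).
    move=> l; rewrite hsS -hsz => hl; rewrite tk_scale /=.
    by apply: mulr_ge0; [exact: ltW | have [_ [_ [h _]]] := hT' l hl].
  have hcd : 0 <= c * d by apply: mulr_ge0; exact: ltW.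
  have hsw0 : sw S' 0 <= c * Pi + N%:R * (c * d).
    rewrite /sw hsS (big_cat_nat (leq0n n0) (leq_addr N n0)) /=; apply: lerD.
      rewrite /Pi /sw mulr_sumr; apply: ler_sum_nat => l hl.
      by rewrite tk_scale /= htl //; case/andP: hl.
    have -> : N%:R * (c * d) = \sum_(n0 <= l < n0 + N) (c * d).
      by rewrite sumr_const_nat addKn mulr_natl.
    apply: ler_sum_nat => l /andP[hl1 hl2].
    by rewrite tk_scale /= htr.
  have hswF : forall i, (n0 <= i)%N -> sw S' i <= N%:R * (c * d).
    move=> i hi; rewrite /sw hsS.
    apply: le_trans (_ : \sum_(i <= l < n0 + N) (c * d) <= _).
      apply: ler_sum_nat => l /andP[hl1 hl2].
      by rewrite tk_scale /= htr //; apply: leq_trans hl1.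
    rewrite sumr_const_nat -[X in X <= _]mulr_natl; apply: ler_wpM2r => //; by rewrite ler_nat leq_subLR leq_add2r.
  have hip : 0 <= (p%:R : R)^-1 by rewrite invr_ge0 ltW.
  have hUB : UBs p S' a <= n0%:R * (a + (c * Pi + N%:R * (c * d)) / p%:R)
                          + N%:R * (N%:R * (c * d) / p%:R).
    rewrite /UBs (sum_ord_nat (size S') (fun i => a + sw S' i / p%:R - arr (tk S' i))) hsS (big_cat_nat (leq0n n0) (leq_addr N n0)) /=.
    apply: lerD.
      set z := (a + (c * Pi + N%:R * (c * d)) / p%:R).
      have -> : n0%:R * z = \sum_(0 <= i < n0) z by rewrite sumr_const_nat subn0 mulr_natl.
      apply: ler_sum_nat => i0 /andP[_ hq].
      rewrite tk_scale /= htl //.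
      have [h0 _] := hT i0 hq.
      have : sw S' i0 / p%:R <= (c * Pi + N%:R * (c * d)) / p%:R.
        apply: ler_wpM2r => //; apply: le_trans hsw0; exact: sw_le0.
      rewrite /z; lra.
    set z := N%:R * (c * d) / p%:R.
    have -> : N%:R * z = \sum_(n0 <= i < n0 + N) z by rewrite sumr_const_nat addKn mulr_natl.
    apply: ler_sum_nat => i0 /andP[hq1 hq2].
    rewrite tk_scale /= htr //.
    have : sw S' i0 / p%:R <= N%:R * (c * d) / p%:R by apply: ler_wpM2r => //; exact: hswF.
    by move=> h; rewrite /z addrAC subrr add0r.
  have hUB2 : UBs p S' a <= C0.
    apply: le_trans hUB _; rewrite /C0; apply: lerD.
      apply: ler_wpM2l; first by rewrite ler0n.
      apply: lerD => //; apply: ler_wpM2r => //; apply: lerD => //.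
      rewrite mulrCA; apply: ler_wpM2l; first exact: ltW.
      lra.
    rewrite mulrA; apply: ler_wpM2r => //.
    have -> : N%:R * (N%:R * (c * d)) = c * (D / 2) by rewrite -hNNd; ring.
    apply: ler_wpM2l; first exact: ltW.
    lra.
  have hMC : M * C0 = x * (D / 4).
    rewrite /x; field; exact: lt0r_neq0.
  apply: le_trans (_ : M * C0 <= _); first exact: ler_wpM2l.
  rewrite hMC; apply: le_trans hALG; apply: ler_wpM2r => //; exact: ltW.
Qed.

Lemma levels p ALG c M : (0 < p)%N -> online_np_scheduler p ALG -> 0 < c -> 0 <= M ->
  forall m k, (k + m = p)%N -> forall T u D, valid_process p T -> 0 <= u -> 0 < D ->
  (forall i, (i < size T)%N -> arr (tk T i) <= u) ->
  (k <= busyN T (ALG T) u D)%N -> Good p c ALG M.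
Proof.
move=> hp hA hc hM; elim=> [|m IH] k hkm T u D hT hu hD harr hk.
- case: (step hp hA hc hT hu hD hM harr hk) => // [[T' [tau [D' [hT' [_ [hD' [_ hb]]]]]]]].
  have := @busy_le p T' (ALG T') tau D' (proj1 hA T' hT') hD'.
  rewrite addn0 in hkm; move=> hle; have := leq_trans hb hle; by rewrite hkm ltnn.
- case: (step hp hA hc hT hu hD hM harr hk) => // [[T' [tau [D' [hT' [htau [hD' [harr' hb]]]]]]]].
  apply: (IH k.+1 _ T' tau D') => //; by rewrite addSnnS.
Qed.

Theorem proposition9p2 :
  forall (p : nat), (0 < p)%N ->
  forall ALG : process -> np_schedule, online_np_scheduler p ALG ->
  forall c : R, 0 < c ->
  exists K : R, 0 < K /\
    forall Rn : nat, exists T : process,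
      valid_process p T /\
      0 < TRT_OPT p (scale c T) /\
      K * Rn%:R * TRT_OPT p (scale c T) <= TRT_ALG ALG T.
Proof.
move=> p hp ALG hA c hc; exists 1; split; first exact: ltr01.
move=> Rn.
have hM : (0 : R) <= Rn%:R by rewrite ler0n.
have hv0 : valid_process p [::] by move=> i.
have [T' [hT' [[i0 [hi0 hs0]] [A [harr hle]]]]] :=
  @levels p ALG c Rn%:R hp hA hc hM p 0%N (add0n p) [::] 0 1 hv0 (lexx 0) ltr01
    (fun i hi => False_ind _ (notF hi)) (leq0n _).
exists T'; split => //.
have hpiS : forall l, (l < size (scale c T'))%N -> 0 <= pi (tk (scale c T') l).
  move=> l; rewrite size_map => hl; rewrite tk_scale /=.
  by apply: mulr_ge0; [exact: ltW | have [_ [_ [h _]]] := hT' l hl].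
have harrS : forall l, (l < size (scale c T'))%N -> arr (tk (scale c T') l) <= A.
  by move=> l; rewrite size_map tk_scale /=; exact: harr.
split.
  apply: (@OPT_pos p (scale c T') A i0 hp hpiS harrS); first by rewrite size_map.
    by rewrite tk_scale /=; exact: mulr_gt0.
  rewrite !tk_scale /=; apply: ler_wpM2l; first exact: ltW.
  by have [_ [_ [_ h]]] := hT' i0 hi0; case: (h hs0).
rewrite mul1r; apply: le_trans hle; apply: ler_wpM2l => //.
exact: OPT_le_UB.
Qed.
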